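(* There exists an SSSCG with weakly monotonic cost functions in which every PSE prescribes the leader a mixed strategy. For instance: $|F|=1$, $R=\{r_1,r_2\}$, $c_{r_1,\ell}(1)=c_{r_2,\ell}(1)=1$, $c_{r_1,\ell}(2)=c_{r_2,\ell}(2)=2$, $c_{r_1,f}(1)=c_{r_1,f}(2)=c_{r_2,f}(1)=c_{r_2,f}(2)=1$; here any pure commitment yields pessimistic leader cost $2$, while $\sigma_\ell(r_1)=\sigma_\ell(r_2)=\tfrac12$ yields $1.5$.
   Context: A symmetric Stackelberg singleton congestion game (SSSCG) consists of a leader $\ell$, a finite set $F$ of followers, a finite set $R$ of resources which every player may select (each player selects exactly one), and cost functions $c_{i,\ell},c_{i,f}:\mathbb N\to\mathbb Q$ ($i\in R$) for the leader and the followers with $c_{i,\ell}(0)=c_{i,f}(0)=0$. The leader commits to a probability distribution $\sigma_\ell$ on $R$ (pure if it puts probability $1$ on one resource). A followers' configuration is $\nu\in\mathbb N^R$ with $\sum_i\nu_i=|F|$. The followers' expected cost of resource $i$ with $x$ followers is $c^{\sigma_\ell}_{i,f}(x)=\sigma_\ell(i)c_{i,f}(x+1)+(1-\sigma_\ell(i))c_{i,f}(x)$; the leader's cost is $c_\ell^{(\sigma_\ell,\nu)}=\sum_{i\in R}\sigma_\ell(i)c_{i,\ell}(\nu_i+1)$. $\nu$ is a Nash equilibrium for $\sigma_\ell$ ($\nu\in E^{\sigma_\ell}$) if for all $i$ with $\nu_i>0$ and all $j\ne i$, $c^{\sigma_\ell}_{i,f}(\nu_i)\le c^{\sigma_\ell}_{j,f}(\nu_j+1)$.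 A PSE is a pair $(\sigma_\ell,\nu)$ such that $\sigma_\ell$ attains the minimum over all leader strategies of $\max_{\nu'\in E^{\sigma_\ell}}c_\ell^{(\sigma_\ell,\nu')}$ and $\nu\in E^{\sigma_\ell}$ attains that maximum. Weakly monotonic: $c_{i,\ell}(x)\le c_{i,\ell}(x+1)$, $c_{i,f}(x)\le c_{i,f}(x+1)$ for all $i,x$. *)

(* Defs.v *)
From HB Require Import structures.
From mathcomp Require Import all_boot all_order all_algebra.
Set Implicit Arguments. Unset Strict Implicit. Unset Printing Implicit Defensive.
Import Order.TTheory GRing.Theory Num.Theory.
Local Open Scope ring_scope.

(* A symmetric Stackelberg singleton congestion game: finite resource set,
   finite follower set, leader/follower cost functions N -> Q vanishing at 0. *)
Record SSSCG := {
  Res : finType;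
  Fol : finType;
  cl : Res -> nat -> rat;
  cf : Res -> nat -> rat;
  cl0 : forall i, cl i 0%N = 0;
  cf0 : forall i, cf i 0%N = 0
}.

Definition weakly_monotonic (G : SSSCG) : Prop :=
  forall (i : Res G) (x : nat),
    cl i x <= cl i x.+1 /\ cf i x <= cf i x.+1.

Section Game.
Variables (G : SSSCG) (R : realFieldType).

Definition leader_strategy (s : {ffun Res G -> R}) : Prop :=
  (forall i, 0 <= s i) /\ \sum_i s i = 1.

Definition pure (s : {ffun Res G -> R}) : Prop := exists i, s i = 1.

Definition config (nu : {ffun Res G -> nat}) : Prop :=
  (\sum_i nu i)%N = #|Fol G|.

(* followers' expected cost of resource i with x followers *)
Definition cfs (s : {ffun Res G -> R}) (i : Res G) (x : nat) : R :=
  s i * ratr (cf i x.+1) + (1 - s i) * ratr (cf i x).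

Definition lcost (s : {ffun Res G -> R}) (nu : {ffun Res G -> nat}) : R :=
  \sum_i s i * ratr (cl i (nu i).+1).

Definition NE (s : {ffun Res G -> R}) (nu : {ffun Res G -> nat}) : Prop :=
  config nu /\
  forall i j, (0 < nu i)%N -> i != j -> cfs s i (nu i) <= cfs s j (nu j).+1.

(* Pessimistic Stackelberg equilibrium: nu attains max_{nu' in E^s} lcost,
   and s minimizes (over all leader strategies s') the max over E^{s'}. *)
Definition PSE (s : {ffun Res G -> R}) (nu : {ffun Res G -> nat}) : Prop :=
  [/\ leader_strategy s, NE s nu,
      (forall nu', NE s nu' -> lcost s nu' <= lcost s nu) &
      (forall s', leader_strategy s' ->
         exists2 nu', NE s' nu' & lcost s nu <= lcost s' nu')].
End Game.

(* Main.v *)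
Require Import Defs.
From HB Require Import structures.
From mathcomp Require Import all_boot all_order all_algebra.
From mathcomp Require Import lra.
Import Order.TTheory GRing.Theory Num.Theory.
Local Open Scope ring_scope.

Definition clE (i : bool) (x : nat) : rat := x%:R.
Definition cfE (i : bool) (x : nat) : rat := (minn x 1)%:R.
Lemma clE0 i : clE i 0%N = 0. Proof. by []. Qed.
Lemma cfE0 i : cfE i 0%N = 0. Proof. by []. Qed.

Definition Gex : SSSCG := @Build_SSSCG bool unit clE cfE clE0 cfE0.

Lemma cfs1 (R : realFieldType) (s : {ffun bool -> R}) i x :
  @cfs Gex R s i x.+1 = 1.
Proof.
rewrite /cfs /= /cfE.
have -> : minn x.+2 1 = 1%N by rewrite /minn.
have -> : minn x.+1 1 = 1%N by rewrite /minn; case: x.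
by rewrite ratr_nat; lra.
Qed.

Lemma NE_config (R : realFieldType) (s : {ffun bool -> R}) nu :
  @NE Gex R s nu <-> @config Gex nu.
Proof.
split; first by case.
move=> H; split => // i j; case E: (nu i) => [|x] // _ _.
by rewrite !cfs1.
Qed.

Lemma config_bool nu : @config Gex nu -> (nu true + nu false = 1)%N.
Proof. by rewrite /config big_bool card_unit. Qed.

Lemma lcostE' (R : realFieldType) (s : {ffun bool -> R}) nu :
  @lcost Gex R s nu = s true * ((nu true)%:R + 1) + s false * ((nu false)%:R + 1).
Proof. by rewrite /lcost big_bool /= /clE !ratr_nat -!natr1. Qed.

Definition nuT : {ffun bool -> nat} := [ffun b => if b then 1%N else 0%N].
Definition nuF : {ffun bool -> nat} := [ffun b => if b then 0%N else 1%N].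

Lemma nuT_NE R s : @NE Gex R s nuT.
Proof. by apply/NE_config; rewrite /config big_bool card_unit !ffunE. Qed.
Lemma nuF_NE R s : @NE Gex R s nuF.
Proof. by apply/NE_config; rewrite /config big_bool card_unit !ffunE. Qed.

Theorem mainTheorem15 :
  exists G : SSSCG, weakly_monotonic G /\
    forall R : realFieldType,
      (exists s nu, @PSE G R s nu) /\
      (forall s nu, @PSE G R s nu -> ~ pure s).
Proof.
exists Gex; split.
  move=> i x /=; rewrite /clE /cfE ler_nat; split => //.
  by rewrite ler_nat; case: x.
move=> R.
pose h : {ffun bool -> R} := [ffun _ => 2^-1].
have hl : @leader_strategy Gex R h.
  split; first by move=> i; rewrite ffunE; lra.
  by rewrite big_bool /= !ffunE; lra.
have hc : forall nu, @NE Gex R h nu -> @lcost Gex R h nu = 3/2.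
  move=> nu /NE_config /config_bool Hn.
  rewrite lcostE' !ffunE.
  have -> : (nu false)%:R = 1 - (nu true)%:R :> R.
    by apply/eqP; rewrite eq_sym subr_eq -natrD addnC Hn.
  lra.
have best : forall s', @leader_strategy Gex R s' ->
   exists2 nu', @NE Gex R s' nu' & 3/2 <= @lcost Gex R s' nu'.
  move=> s' [Hp]; rewrite big_bool /= => Hs.
  have := Hp true; have := Hp false => Hf Ht.
  case: (lerP (2^-1) (s' true)) => Hst.
    exists nuT; first exact: nuT_NE.
    by rewrite lcostE' !ffunE /=; lra.
  exists nuF; first exact: nuF_NE.
  by rewrite lcostE' !ffunE /=; lra.
split.
  exists h, nuT; split => //; first exact: nuT_NE.
    by move=> nu' Hn; rewrite (hc _ Hn) (hc _ (nuT_NE _ _)).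
  move=> s' Hs'; have [nu' Hn Hle] := best s' Hs'.
  by exists nu' => //; rewrite (hc _ (nuT_NE _ _)).
move=> s nu [[Hp Hs] HN Hmax Hmin] [i Hi].
have [nu' Hn' Hle] := Hmin h hl.
rewrite (hc _ Hn') in Hle.
have Hs2 : s true + s false = 1 by move: Hs; rewrite big_bool.
case: i Hi => Hi.
  have := Hmax nuT (nuT_NE _ _); rewrite lcostE' !ffunE /=.
  lra.
have := Hmax nuF (nuF_NE _ _); rewrite lcostE' !ffunE /=.
lra.
Qed.
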